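(* Let $(T_0,\widetilde T_0)$ be a joint pair of closed abstract Friedrichs operators on a complex Hilbert space $\mathcal{H}$, and let $T_1:=\widetilde T_0^*$, $\widetilde T_1:=T_0^*$, $\mathcal{W}_0:=\operatorname{dom}T_0=\operatorname{dom}\widetilde T_0$ and $\mathcal{W}:=\operatorname{dom}T_1=\operatorname{dom}\widetilde T_1$. Then $$\mathcal{W}=\mathcal{W}_0\dotplus\operatorname{ker}T_1\dotplus\operatorname{ker}\widetilde T_1,$$ i.e. every $u\in\mathcal{W}$ can be written uniquely as $u=u_0+\nu+\tilde\nu$ with $u_0\in\mathcal{W}_0$, $\nu\in\operatorname{ker}T_1$, $\tilde\nu\in\operatorname{ker}\widetilde T_1$.
   Context: $\mathcal{H}$ is a complex Hilbert space with inner product $\langle\cdot,\cdot\rangle$ (linear in the first argument) and norm $\|\cdot\|$. A pair $(T,\widetilde T)$ of densely defined linear operators on $\mathcal{H}$ is a joint pair of abstract Friedrichs operators if: (T1) $T$ and $\widetilde T$ have a common dense domain $\mathcal{D}$ and $\langle T\varphi,\psi\rangle=\langle\varphi,\widetilde T\psi\rangle$ for all $\varphi,\psi\in\mathcal{D}$; (T2) there is $c>0$ with $\|(T+\widetilde T)\varphi\|\le c\|\varphi\|$ for all $\varphi\in\mathcal{D}$; (T3) there is $\mu_0>0$ with $\langle (T+\widetilde T)\varphi,\varphi\rangle\ge 2\mu_0\|\varphi\|^2$ for all $\varphi\in\mathcal{D}$. A joint pair of closed abstract Friedrichs operators is such a pair $(T_0,\widetilde T_0)$ in which both operators are closed. For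 such a pair one has $T_0\subseteq T_1$, $\widetilde T_0\subseteq\widetilde T_1$ and $\operatorname{dom}T_1=\operatorname{dom}\widetilde T_1$. *)

(* Defs.v *)
From HB Require Import structures.
From mathcomp Require Import all_boot all_order all_algebra.
From mathcomp Require Import complex.
From mathcomp Require Import reals.
Set Implicit Arguments. Unset Strict Implicit. Unset Printing Implicit Defensive.
Import Order.TTheory GRing.Theory Num.Theory.
Local Open Scope ring_scope.
Local Open Scope complex_scope.

Section Hilbert.
Variables (R : realType) (V : lmodType R[i]) (ip : V -> V -> R[i]).

Definition is_inner_product : Prop :=
  [/\ (forall (a : R[i]) x y z, ip (a *: x + y) z = a * ip x z + ip y z),
      (forall x y, ip y x = (ip x y)^*),
      (forall x, 0 <= ip x x) &
      (forall x, ip x x = 0 -> x = 0)].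

(* the induced norm ||x|| = sqrt <x,x> (a nonnegative real element of R[i]) *)
Definition hnorm (x : V) : R[i] := sqrtC (ip x x).

Definition converges (u : nat -> V) (l : V) : Prop :=
  forall e : R, 0 < e -> exists N : nat, forall n, (N <= n)%N -> hnorm (u n - l) < e%:C.

Definition cauchy_seq (u : nat -> V) : Prop :=
  forall e : R, 0 < e -> exists N : nat, forall m n, (N <= m)%N -> (N <= n)%N ->
    hnorm (u m - u n) < e%:C.

Definition hilbert_space : Prop :=
  is_inner_product /\ forall u, cauchy_seq u -> exists l, converges u l.

(* a (possibly unbounded) operator with domain *)
Record op := Op { dom : V -> Prop; app : V -> V }.

Definition linear_op (T : op) : Prop :=
  [/\ dom T 0,
      (forall (a : R[i]) x y, dom T x -> dom T y -> dom T (a *: x + y)) &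
      (forall (a : R[i]) x y, dom T x -> dom T y ->
         app T (a *: x + y) = a *: app T x + app T y)].

Definition dense_set (D : V -> Prop) : Prop :=
  forall x (e : R), 0 < e -> exists y, D y /\ hnorm (x - y) < e%:C.

Definition closed_op (T : op) : Prop :=
  forall (u : nat -> V) x y, (forall n, dom T (u n)) ->
    converges u x -> converges (fun n => app T (u n)) y -> dom T x /\ app T x = y.

Definition is_adjoint (S T : op) : Prop :=
  (forall v, dom S v <-> exists w, forall u, dom T u -> ip (app T u) v = ip u w) /\
  (forall u v, dom T u -> dom S v -> ip (app T u) v = ip u (app S v)).

Definition joint_friedrichs (T Tt : op) : Prop :=
  linear_op T /\ linear_op Tt /\
  (forall x, dom T x <-> dom Tt x) /\
  dense_set (dom T) /\
  (forall phi psi, dom T phi -> dom T psi ->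
     ip (app T phi) psi = ip phi (app Tt psi)) /\
  (exists c : R, 0 < c /\ forall phi, dom T phi ->
     hnorm (app T phi + app Tt phi) <= c%:C * hnorm phi) /\
  (exists mu0 : R, 0 < mu0 /\ forall phi, dom T phi ->
     2 * mu0%:C * hnorm phi ^+ 2 <= ip (app T phi + app Tt phi) phi).

Definition joint_closed_friedrichs (T Tt : op) : Prop :=
  [/\ joint_friedrichs T Tt, closed_op T & closed_op Tt].

End Hilbert.

(* Main.v *)
Require Import Defs.
From HB Require Import structures.
From mathcomp Require Import all_boot all_order all_algebra.
From mathcomp Require Import complex.
From mathcomp Require Import reals boolp classical_sets.
From mathcomp Require Import ring lra.
Import Order.TTheory GRing.Theory Num.Theory.
Local Open Scope ring_scope.
Local Notation Re := complex.Re.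
Local Notation Im := complex.Im.

Section Cplx.
Local Open Scope complex_scope.
Context {R : realType}.
Implicit Types (x y z : R[i]) (r s : R).

Lemma ReD x y : Re (x + y) = Re x + Re y. Proof. by case: x => ? ?; case: y => ? ?. Qed.
Lemma ImD x y : Im (x + y) = Im x + Im y. Proof. by case: x => ? ?; case: y => ? ?. Qed.
Lemma ReN x : Re (- x) = - Re x. Proof. by case: x => ? ?. Qed.
Lemma ImN x : Im (- x) = - Im x. Proof. by case: x => ? ?. Qed.
Lemma ReB x y : Re (x - y) = Re x - Re y. Proof. by rewrite ReD ReN. Qed.
Lemma ImB x y : Im (x - y) = Im x - Im y. Proof. by rewrite ImD ImN. Qed.
Lemma ReJ x : Re (x^*) = Re x. Proof. by case: x => ? ?. Qed.
Lemma ReRM r x : Re (r%:C * x) = r * Re x.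
Proof. by case: x => a b /=; simpc. Qed.
Lemma ReC r : Re (r%:C) = r. Proof. by []. Qed.
Lemma Re0 : Re (0 : R[i]) = 0. Proof. by []. Qed.

Lemma conjR r : (r%:C)^* = r%:C.
Proof. by apply/eqP; rewrite eq_complex /= oppr0 !eqxx. Qed.

Definition cn2 x := Re x ^+ 2 + Im x ^+ 2.
Lemma cn2_ge0 x : 0 <= cn2 x.
Proof. by rewrite /cn2 addr_ge0 ?sqr_ge0. Qed.
Lemma cn2_eq0 x : cn2 x = 0 -> x = 0.
Proof.
case: x => a b; rewrite /cn2 /= => /eqP.
rewrite paddr_eq0 ?sqr_ge0 // !expf_eq0 /= => /andP[/eqP -> /eqP ->] //.
Qed.
Lemma cn2_mulJ x : x * x^* = (cn2 x)%:C.
Proof. case: x => a b; rewrite /cn2 /=; simpc.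
by rewrite !expr2 (mulrC b a) addNr. Qed.
Lemma Re_sqr_le x : Re x ^+ 2 <= cn2 x.
Proof. by rewrite /cn2 lerDl sqr_ge0. Qed.
Lemma cn2D x y : cn2 (x + y) <= 2 * cn2 x + 2 * cn2 y.
Proof. rewrite /cn2 ReD ImD.
have := sqr_ge0 (Re x - Re y); have := sqr_ge0 (Im x - Im y). nra. Qed.
Lemma cn2N x : cn2 (- x) = cn2 x.
Proof. by rewrite /cn2 ReN ImN !sqrrN. Qed.
Lemma cn2J x : cn2 (x^*) = cn2 x.
Proof. by case: x => a b; rewrite /cn2 /= sqrrN. Qed.
Lemma cn2_real r : cn2 (r%:C) = r ^+ 2.
Proof. by rewrite /cn2 /= expr0n addr0. Qed.
End Cplx.

Section IP.
Local Open Scope complex_scope.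
Context {R : realType} {V : lmodType R[i]} {ip : V -> V -> R[i]}.
Hypothesis Hip : is_inner_product ip.
Implicit Types (x y z u v w : V) (a b : R[i]) (r s : R).

Lemma ipDZl a x y z : ip (a *: x + y) z = a * ip x z + ip y z.
Proof. by case: Hip. Qed.
Lemma ipJ x y : ip y x = (ip x y)^*.
Proof. by case: Hip. Qed.
Lemma ip_ge0 x : 0 <= ip x x.
Proof. by case: Hip. Qed.
Lemma ip_eq0 x : ip x x = 0 -> x = 0.
Proof. by case: Hip => _ _ _; apply. Qed.

Lemma ip0l z : ip 0 z = 0.
Proof.
have := ipDZl 1 0 0 z; rewrite scale1r addr0 mul1r => h.
by have := congr1 (fun t => t - ip 0 z) h; rewrite subrr addrK.
Qed.
Lemma ipDl x y z : ip (x + y) z = ip x z + ip y z.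
Proof. by rewrite -{1}[x]scale1r ipDZl mul1r. Qed.
Lemma ipZl a x z : ip (a *: x) z = a * ip x z.
Proof. by rewrite -[a *: x]addr0 ipDZl ip0l addr0. Qed.
Lemma ipNl x z : ip (- x) z = - ip x z.
Proof. by rewrite -scaleN1r ipZl mulN1r. Qed.
Lemma ipBl x y z : ip (x - y) z = ip x z - ip y z.
Proof. by rewrite ipDl ipNl. Qed.
Lemma ip0r z : ip z 0 = 0.
Proof. by rewrite ipJ ip0l conjc0. Qed.
Lemma ipDr x y z : ip z (x + y) = ip z x + ip z y.
Proof. by rewrite ipJ ipDl rmorphD /= -!ipJ. Qed.
Lemma ipZr a x z : ip z (a *: x) = a^* * ip z x.
Proof. by rewrite ipJ ipZl rmorphM /= -ipJ. Qed.
Lemma ipNr x z : ip z (- x) = - ip z x.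
Proof. by rewrite ipJ ipNl rmorphN /= -ipJ. Qed.
Lemma ipBr x y z : ip z (x - y) = ip z x - ip z y.
Proof. by rewrite ipDr ipNr. Qed.

Definition N x := Re (ip x x).
Lemma ipxx x : ip x x = (N x)%:C.
Proof.
have := ip_ge0 x; rewrite /N; case: (ip x x) => a b.
by rewrite lecE /= => /andP[/eqP -> _].
Qed.
Lemma N_ge0 x : 0 <= N x.
Proof. by have := ip_ge0 x; rewrite ipxx lecR. Qed.
Lemma N_eq0 x : N x = 0 -> x = 0.
Proof. by move=> h; apply: ip_eq0; rewrite ipxx h. Qed.
Lemma N0 : N 0 = 0.
Proof. by rewrite /N ip0l. Qed.
Lemma ReipJ x y : Re (ip y x) = Re (ip x y).
Proof. by rewrite ipJ ReJ. Qed.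
Lemma cn2ipJ x y : cn2 (ip y x) = cn2 (ip x y).
Proof. by rewrite ipJ cn2J. Qed.

Lemma N_add x y : N (x + y) = N x + N y + 2 * Re (ip x y).
Proof.
rewrite /N ipDl !ipDr !ReD (ReipJ x y); lra.
Qed.
Lemma N_sub x y : N (x - y) = N x + N y - 2 * Re (ip x y).
Proof.
rewrite /N ipBl !ipBr !ReB ?ReD (ReipJ x y); lra.
Qed.
Lemma N_opp x : N (- x) = N x.
Proof. by rewrite /N ipNl ipNr opprK. Qed.
Lemma N_subC x y : N (x - y) = N (y - x).
Proof. by rewrite -N_opp opprB. Qed.
Lemma N_scaleR r x : N (r%:C *: x) = r ^+ 2 * N x.
Proof.
by rewrite /N ipZl ipZr !ipxx /=; simpc; rewrite /= mulrA expr2.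
Qed.
Lemma parallel x y : N (x + y) + N (x - y) = 2 * N x + 2 * N y.
Proof. rewrite N_add N_sub; lra. Qed.
Lemma N_addle x y : N (x + y) <= 2 * N x + 2 * N y.
Proof. have := parallel x y; have := N_ge0 (x - y); lra. Qed.

Lemma N_var x y s :
  N (x - (s%:C * ip x y) *: y) = N x - 2 * s * cn2 (ip x y) + s ^+ 2 * cn2 (ip x y) * N y.
Proof.
rewrite N_sub /N !ipZl !ipZr (ipxx y) -/(N x) -/(N y).
move: (ip x y) => c; case: c => a b /=; simpc; rewrite /cn2 /=.
ring.
Qed.

Lemma CS x y : cn2 (ip x y) <= N x * N y.
Proof.
have [/N_eq0 ->|nz] := eqVneq (N y) 0.
  by rewrite ip0r N0 mulr0 /cn2 /= expr0n /= addr0.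
have Ny0 : 0 < N y by rewrite lt_def nz N_ge0.
set s := (N y)^-1.
have e : s * N y = 1 by rewrite mulVf.
have h := N_ge0 (x - (s%:C * ip x y) *: y); rewrite N_var in h.
set q := cn2 (ip x y) in h *.
have h2 : q * s <= N x.
  have hh : s ^+ 2 * q * N y = q * s * (s * N y) by ring.
  rewrite hh e mulr1 in h.
  lra.
have -> : q = q * s * N y by rewrite -mulrA e mulr1.
by rewrite ler_wpM2r // ltW.
Qed.

Definition nm x := Num.sqrt (N x).
Lemma nm_ge0 x : 0 <= nm x. Proof. exact: sqrtr_ge0. Qed.
Lemma nm_sqr x : nm x ^+ 2 = N x. Proof. by rewrite sqr_sqrtr ?N_ge0. Qed.
Lemma nm0 : nm 0 = 0. Proof. by rewrite /nm N0 sqrtr0. Qed.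
Lemma nm_eq0 x : nm x = 0 -> x = 0.
Proof. by move=> h; apply: N_eq0; rewrite -nm_sqr h expr0n. Qed.
Lemma nm_opp x : nm (- x) = nm x. Proof. by rewrite /nm N_opp. Qed.
Lemma nm_subC x y : nm (x - y) = nm (y - x). Proof. by rewrite /nm N_subC. Qed.

Lemma ReCS x y : Re (ip x y) <= nm x * nm y.
Proof.
have h1 := Re_sqr_le (ip x y); have h2 := CS x y.
rewrite -!nm_sqr -exprMn in h2.
have hP : 0 <= nm x * nm y by rewrite mulr_ge0 ?nm_ge0.
move: h1 h2 hP; set P := nm x * nm y; set r := Re _; move=> h1 h2 hP.
nra.
Qed.
Lemma ReCSN x y : - Re (ip x y) <= nm x * nm y.
Proof. by rewrite -ReN -ipNl -(nm_opp x) ReCS. Qed.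
Lemma nm_tri x y : nm (x + y) <= nm x + nm y.
Proof.
have h := N_add x y; rewrite -!nm_sqr in h.
have := ReCS x y; have := nm_ge0 x; have := nm_ge0 y; have := nm_ge0 (x + y).
nra.
Qed.
End IP.
Arguments N {R V} ip x.
Arguments nm {R V} ip x.


Section Lim.
Context {R : realType}.
Implicit Types (a b : nat -> R) (X Y K : R).

Definition null a := forall e : R, 0 < e -> exists M : nat, forall n, (M <= n)%N -> a n < e.

Lemma null_add {a b} : null a -> null b -> null (fun n => a n + b n).
Proof.
move=> ha hb e e0.
have e2 : 0 < e / 2 by rewrite divr_gt0.
have [M1 h1] := ha _ e2; have [M2 h2] := hb _ e2.
exists (maxn M1 M2) => n hn.
have := h1 n (leq_trans (leq_maxl _ _) hn); have := h2 n (leq_trans (leq_maxr _ _) hn).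
lra.
Qed.

Lemma null_scale {K a} : 0 <= K -> null a -> null (fun n => K * a n).
Proof.
move=> K0 ha e e0.
have e2 : 0 < e / (K + 1) by rewrite divr_gt0 // ltr_pwDr.
have [M h] := ha _ e2; exists M => n hn.
have h1 : K * a n <= K * (e / (K + 1)) by rewrite ler_wpM2l // ltW // h.
have h2 : K * (e / (K + 1)) < e.
  rewrite mulrA ltr_pdivrMr ?ltr_pwDr //; nra.
lra.
Qed.

Lemma null_le {a b} : (forall n, b n <= a n) -> null a -> null b.
Proof.
move=> hle ha e e0; have [M h] := ha _ e0; exists M => n hn.
exact: le_lt_trans (hle n) (h n hn).
Qed.

Lemma null_mul {a b} : (forall n, 0 <= b n) -> null a -> null b -> null (fun n => a n * b n).
Proof.
move=> b0 ha hb e e0.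
have [M1 h1] := ha _ ltr01; have [M2 h2] := hb _ e0.
exists (maxn M1 M2) => n hn.
have := h1 n (leq_trans (leq_maxl _ _) hn); have := h2 n (leq_trans (leq_maxr _ _) hn).
have := b0 n; nra.
Qed.

Lemma null_inv : null (fun n => (n.+1%:R : R)^-1).
Proof.
move=> e e0; exists (Num.trunc e^-1) => n hn.
have h1 := truncnS_gt e^-1.
have h2 : (Num.trunc e^-1).+1%:R <= n.+1%:R :> R by rewrite ler_nat ltnS.
rewrite -[e]invrK ltf_pV2 ?posrE ?invr_gt0 ?ltr0n //.
exact: lt_le_trans h1 h2.
Qed.

Lemma null_sqrt {a} : (forall n, 0 <= a n) -> null a -> null (fun n => Num.sqrt (a n)).
Proof.
move=> a0 ha e e0; have [M h] := ha (e ^+ 2) (exprn_gt0 2 e0).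
exists M => n hn; have := h n hn.
by rewrite -ltr_sqrt ?exprn_gt0 // sqrtr_sqr gtr0_norm.
Qed.

Lemma null0 : null (fun _ => 0).
Proof. by move=> e e0; exists 0%N. Qed.

Lemma lim_le {X Y a} : null a -> (forall n, X <= Y + a n) -> X <= Y.
Proof.
move=> ha h; apply/ler_addgt0Pr => e e0.
have [M hM] := ha _ e0; have := hM M (leqnn M); have := h M; lra.
Qed.

Definition rcv (x : nat -> R) X := null (fun n => (x n - X) ^+ 2).

Lemma rcv_le {x y X Y} : rcv x X -> rcv y Y -> (forall n, x n <= y n) -> X <= Y.
Proof.
move=> hx hy hle.
have nx := null_sqrt (fun n => sqr_ge0 _) hx.
have ny := null_sqrt (fun n => sqr_ge0 _) hy.
apply: (lim_le (null_add nx ny)) => n /=; rewrite !sqrtr_sqr.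
have := hle n; have := ler_norm (x n - X); have := ler_norm (y n - Y).
have := ler_norm (X - x n); rewrite distrC.
have := ler_norm (Y - y n); rewrite [`|Y - _|]distrC.
lra.
Qed.

Lemma rcv_scale k x X : rcv x X -> rcv (fun n => k * x n) (k * X).
Proof.
move=> h; apply: null_le (null_scale (K := k ^+ 2) (sqr_ge0 k) h) => n /=.
by rewrite -mulrBr exprMn.
Qed.
End Lim.

Section CV.
Local Open Scope complex_scope.
Context {R : realType} {V : lmodType R[i]} {ip : V -> V -> R[i]}.
Hypothesis Hh : hilbert_space ip.
Let Hip : is_inner_product ip. Proof. by case: Hh. Qed.
Implicit Types (x y : V) (u w : nat -> V) (z : nat -> R[i]).
Local Notation N := (N ip).
Local Notation nm := (nm ip).

Definition cv (u : nat -> V) l := null (fun n => nm (u n - l)).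
Definition cs (u : nat -> V) := forall e : R, 0 < e -> exists M : nat,
  forall m n, (M <= m)%N -> (M <= n)%N -> nm (u m - u n) < e.
Definition ccv (z : nat -> R[i]) l := null (fun n => cn2 (z n - l)).

Lemma hnormE x : hnorm ip x = (nm x)%:C.
Proof.
rewrite /hnorm (ipxx Hip) -(nm_sqr Hip) rmorphXn /=.
by rewrite sqrCK // ler0c nm_ge0.
Qed.

Lemma conv_cv u l : converges ip u l <-> cv u l.
Proof.
split=> h e e0; have [M hM] := h e e0; exists M => n hn; have := hM n hn;
by rewrite hnormE ltcR.
Qed.

Lemma cauchy_cs u : cauchy_seq ip u <-> cs u.
Proof.
split=> h e e0; have [M hM] := h e e0; exists M => m n hm hn; have := hM m n hm hn;
by rewrite hnormE ltcR.
Qed.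

Lemma complete {u} : cs u -> exists l, cv u l.
Proof.
move=> /cauchy_cs hc; case: Hh => _ /(_ u hc) [l hl]; exists l.
by apply/conv_cv.
Qed.

Lemma cv_cs {u l} : cv u l -> cs u.
Proof.
move=> h e e0.
have e2 : 0 < e / 2 by rewrite divr_gt0.
have [M hM] := h _ e2; exists M => m n hm hn.
have h1 := hM m hm; have h2 := hM n hn.
have := nm_tri Hip (u m - l) (l - u n).
rewrite addrA subrK (nm_subC Hip l) => h3.
lra.
Qed.

Lemma cvN {u l} : cv u l -> null (fun n => N (u n - l)).
Proof.
move=> h; apply: (null_le _ (null_mul (fun n => nm_ge0 _) h h)) => n /=.
by rewrite -(nm_sqr Hip) expr2.
Qed.

Lemma ip_ccv {u w a b} : cv u a -> cv w b ->
  ccv (fun n => ip (u n) (w n)) (ip a b).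
Proof.
move=> hu hw.
have pu := cvN hu; have pw := cvN hw.
have hnull : null (fun n => 4 * (N (u n - a) * N (w n - b)) + 4 * N b * N (u n - a)
   + 2 * N a * N (w n - b)).
  apply: null_add; [apply: null_add|].
  - by apply: null_scale => //; apply: null_mul => // n; exact: N_ge0.
  - by apply: null_scale => //; rewrite mulr_ge0 ?N_ge0.
  - by apply: null_scale => //; rewrite mulr_ge0 ?N_ge0.
apply: null_le hnull => n /=.
have -> : ip (u n) (w n) - ip a b =
   ip (u n - a) (w n - b) + ip (u n - a) b + ip a (w n - b).
  rewrite !(ipBl Hip) !(ipBr Hip); ring.
have h1 := cn2D (ip (u n - a) (w n - b) + ip (u n - a) b) (ip a (w n - b)).
have h2 := cn2D (ip (u n - a) (w n - b)) (ip (u n - a) b).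
have h3 := CS Hip (u n - a) (w n - b).
have h4 := CS Hip (u n - a) b.
have h5 := CS Hip a (w n - b).
have := N_ge0 Hip (u n - a); have := N_ge0 Hip (w n - b); have := N_ge0 Hip a;
have := N_ge0 Hip b.
lra.
Qed.

Lemma ccv_uniq {z a b} : ccv z a -> ccv z b -> a = b.
Proof.
move=> ha hb; apply/eqP; rewrite -subr_eq0; apply/eqP; apply: cn2_eq0; apply/eqP; rewrite eq_le cn2_ge0 andbT.
have hn := null_add (null_scale (K := 2) (ler0n _ 2) ha) (null_scale (K := 2) (ler0n _ 2) hb).
apply: (lim_le hn) => n /=.
have := cn2D (a - z n) (z n - b); rewrite addrA subrK.
by rewrite -(cn2N (a - z n)) opprB add0r.
Qed.

Lemma ccv_Re {z l} : ccv z l -> rcv (fun n => Re (z n)) (Re l).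
Proof.
move=> h; apply: null_le h => n /=; rewrite -ReB; exact: Re_sqr_le.
Qed.

Lemma cv_const a : cv (fun _ => a) a.
Proof. by move=> e e0; exists 0%N => n _; rewrite subrr nm0. Qed.

Lemma ccv_ext {z z' l} : (forall n, z n = z' n) -> ccv z l -> ccv z' l.
Proof. by move=> h; apply: null_le => n; rewrite h. Qed.
End CV.
Arguments cv {R V} ip u l.
Arguments cs {R V} ip u.


Section Proj.
Local Open Scope complex_scope.
Context {R : realType} {V : lmodType R[i]} {ip : V -> V -> R[i]}.
Hypothesis Hh : hilbert_space ip.
Let Hip : is_inner_product ip. Proof. by case: Hh. Qed.
Local Notation N := (N ip).
Local Notation nm := (nm ip).

Lemma N_scale (a : R[i]) (v : V) : N (a *: v) = cn2 a * N v.
Proof.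
rewrite /N (ipZl Hip) (ipZr Hip) (ipxx Hip) -/(N v).
by case: a => a b /=; simpc; rewrite /cn2 /=; ring.
Qed.

Lemma proj (M : V -> Prop) (M0 : M 0)
  (Mlin : forall a x y, M x -> M y -> M (a *: x + y))
  (Mcl : forall u l, (forall n, M (u n)) -> cv ip u l -> M l) f :
  exists m, M m /\ forall z, M z -> ip z (f - m) = 0.
Proof.
pose E : set R := (fun r => exists m, M m /\ r = N (f - m)).
have lbE : has_lbound E by exists 0 => r [m [_ ->]]; exact: N_ge0.
have neE : (E !=set0)%classic by exists (N (f - 0)), 0.
pose d := inf E.
have dle : forall m, M m -> d <= N (f - m).
  by move=> m Mm; apply: ge_inf => //; exists m.
have adh : forall n : nat, exists m, M m /\ N (f - m) < d + (n.+1%:R)^-1.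
  move=> n; have hn0 : 0 < (n.+1%:R : R)^-1 by rewrite invr_gt0 ltr0n.
  have [r [m [Mm ->]] hr] := @inf_adherent R E _ hn0 (conj neE lbE).
  by exists m.
have [ms hms] := choice adh.
have Msub : forall x y, M x -> M y -> M (x + y).
  by move=> x y Mx My; rewrite -[x]scale1r; apply: Mlin.
have Mscale : forall a x, M x -> M (a *: x).
  by move=> a x Mx; rewrite -[a *: x]addr0; apply: Mlin.
have hcs : cs ip ms.
  move=> e e0; have e2 : 0 < e ^+ 2 / 4 by rewrite divr_gt0 ?exprn_gt0.
  have [K hK] := null_inv _ e2; exists K => m n hm hn.
  have h1 := hK m hm; have h2 := hK n hn.
  have [Mm hm'] := hms m; have [Mn hn'] := hms n.
  pose p := (2 : R[i])^-1 *: (ms m + ms n).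
  have Mp : M p by apply: Mscale; apply: Msub.
  have hp := dle p Mp.
  have hpar := parallel Hip (f - ms m) (f - ms n).
  have e1 : f - ms m + (f - ms n) = (2 : R[i]) *: (f - p).
    rewrite /p scalerBr scalerA mulfV ?pnatr_eq0 // scale1r.
    rewrite scaler_nat mulr2n; rewrite !opprD !addrA; congr (_ - _).
    by rewrite addrAC.
  have e3 : f - ms m - (f - ms n) = ms n - ms m.
    by rewrite opprB addrA addrC addrA addKr addrC.
  rewrite e1 e3 N_scale in hpar.
  have c2 : cn2 (2 : R[i]) = 4.
    have -> : (2 : R[i]) = (2 : R)%:C by rewrite rmorph_nat.
    by rewrite cn2_real expr2 -natrM.
  rewrite c2 in hpar.
  have hN : N (ms m - ms n) < e ^+ 2.
    rewrite (N_subC Hip); move: hpar hm' hn' hp h1 h2.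
    set A := N (ms n - ms m); set B := N (f - p); set C := N (f - ms m).
    set D := N (f - ms n); set I1 := m.+1%:R^-1; set I2 := n.+1%:R^-1.
    set E2 := e ^+ 2; move=> *; lra.
  have := nm_ge0 (ms m - ms n); rewrite -(nm_sqr Hip) in hN.
  move: hN; set q := nm _ => hN q0.
  have := e0; nra.
have [minf hminf] := complete Hh hcs.
have Mminf : M minf by apply: (Mcl ms) => // n; case: (hms n).
exists minf; split => // z Mz.
set g := f - minf.
have Ng : N g <= d.
  have cvg : cv ip (fun n => f - ms n) g.
    apply: null_le hminf => n /=.
    by rewrite /g opprB addrA addrC addrA addKr addrC (nm_subC Hip).
  have h1 := ccv_Re (ip_ccv Hh cvg cvg).
  have h2 : rcv (fun n => d + (n.+1%:R)^-1) d.
    apply: null_le (null_mul (fun n => ltW _) null_inv null_inv) => n /=.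
      by rewrite addrAC subrr add0r expr2.
    by rewrite invr_gt0 ltr0n.
  apply: (rcv_le h1 h2) => n /=.
  by have [_ /ltW] := hms n.
set c := ip g z.
set s := (N z + 1)^-1.
have Nz0 := N_ge0 Hip z.
have s0 : 0 < s by rewrite invr_gt0; lra.
have hs : s * N z = 1 - s.
  have hpos : 0 < N z + 1 by lra.
  have h1 : s * (N z + 1) = 1 by rewrite /s mulVf // lt0r_neq0.
  have -> : s * N z = s * (N z + 1) - s by ring.
  by rewrite h1.
have Mm' : M ((s%:C * c) *: z + minf) := Mlin _ _ _ Mz Mminf.
have := dle _ Mm'.
have -> : f - ((s%:C * c) *: z + minf) = g - (s%:C * ip g z) *: z.
  by rewrite /g opprD addrA addrAC.
rewrite N_var // => hv.
have q0 := cn2_ge0 c.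
have hq : cn2 c <= 0.
  have e4 : s ^+ 2 * cn2 (ip g z) * N z = s * cn2 c * (s * N z) by rewrite /c; ring.
  rewrite e4 hs -/c in hv.
  move: hv q0; set q := cn2 c => hv q0.
  nra.
have : c = 0 by apply: cn2_eq0; apply/eqP; rewrite eq_le hq cn2_ge0.
by rewrite (ipJ Hip) /c => ->; rewrite conjc0.
Qed.
End Proj.

Section Op.
Local Open Scope complex_scope.
Context {R : realType} {V : lmodType R[i]} {ip : V -> V -> R[i]}.
Variables (T0 Tt0 T1 Tt1 : op V) (c mu0 : R).
Hypothesis Hh : hilbert_space ip.
Hypothesis L0 : linear_op T0.
Hypothesis Lt0 : linear_op Tt0.
Hypothesis Hdom : forall x, dom T0 x <-> dom Tt0 x.
Hypothesis Hdense : dense_set ip (dom T0).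
Hypothesis Hformal : forall phi psi, dom T0 phi -> dom T0 psi ->
  ip (app T0 phi) psi = ip phi (app Tt0 psi).
Hypothesis Hc : 0 < c.
Hypothesis Hbnd : forall phi, dom T0 phi ->
  hnorm ip (app T0 phi + app Tt0 phi) <= c%:C * hnorm ip phi.
Hypothesis Hmu : 0 < mu0.
Hypothesis Hpos : forall phi, dom T0 phi ->
  2 * mu0%:C * hnorm ip phi ^+ 2 <= ip (app T0 phi + app Tt0 phi) phi.
Hypothesis Hcl : closed_op ip T0.
Hypothesis HA1 : is_adjoint ip T1 Tt0.
Hypothesis HA2 : is_adjoint ip Tt1 T0.

Let Hip : is_inner_product ip. Proof. by case: Hh. Qed.
Local Notation N := (N ip).
Local Notation nm := (nm ip).
Local Notation D := (dom T0).
Let nmg x : 0 <= nm x := @nm_ge0 _ _ ip x.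
Local Notation S0 := (fun phi => app T0 phi + app Tt0 phi).

Lemma bnd {phi} : D phi -> nm (S0 phi) <= c * nm phi.
Proof.
by move=> Dp; have := Hbnd _ Dp; rewrite !(hnormE Hh) -rmorphM /= lecR.
Qed.

Lemma two_C : (2 : R[i]) = (2 : R)%:C.
Proof. by rewrite rmorph_nat. Qed.

Lemma pos {phi} : D phi -> 2 * mu0 * N phi <= Re (ip (S0 phi) phi).
Proof.
move=> Dp; have := Hpos _ Dp; rewrite (hnormE Hh) -rmorphXn /= (nm_sqr Hip).
by rewrite two_C -!rmorphM /= lecE => /andP[_].
Qed.

Lemma lin_gen (T : op V) : linear_op T ->
  [/\ dom T 0, app T 0 = 0,
   (forall x y, dom T x -> dom T y -> dom T (x - y) /\ app T (x - y) = app T x - app T y) &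
   (forall x y, dom T x -> dom T y -> dom T (x + y) /\ app T (x + y) = app T x + app T y)].
Proof.
case=> d0 dl al.
have a0 : app T 0 = 0.
  have := al 1 0 0 d0 d0; rewrite !scale1r addr0 => h.
  by have := congr1 (fun t => t - app T 0) h; rewrite /= subrr addrK => <-.
split => // x y dx dy.
  by rewrite -[x - y]addrC -scaleN1r; split; [apply: dl | rewrite al // scaleN1r addrC].
by rewrite -[x]scale1r; split; [apply: dl | rewrite al // !scale1r].
Qed.

Lemma dens0 x : (forall phi, D phi -> ip phi x = 0) -> x = 0.
Proof.
move=> h; apply: (nm_eq0 Hip); apply/eqP; rewrite eq_le (nmg x) andbT.
apply/ler_addgt0Pr => e e0; rewrite add0r.
have [y [Dy hy]] := Hdense x e e0; rewrite (hnormE Hh) ltcR in hy.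
have h1 : N x <= nm (x - y) * nm x.
  have -> : N x = Re (ip (x - y) x) by rewrite (ipBl Hip) (h y Dy) subr0.
  exact: ReCS.
rewrite -(nm_sqr Hip) in h1.
have := nmg (x - y); have := nmg x.
move: h1 hy; set a := nm x; set b := nm (x - y) => h1 hy ha hb.
suff : a <= b by lra.
have [a0|apos] := eqVneq a 0; first by move: hb; rewrite a0.
have ap : 0 < a by rewrite lt_def apos ha.
by rewrite -(ler_pM2r ap) -expr2.
Qed.

Lemma dens_eq a b : (forall phi, D phi -> ip phi a = ip phi b) -> a = b.
Proof.
move=> h; apply/eqP; rewrite -subr_eq0; apply/eqP; apply: dens0 => phi Dp.
by rewrite (ipBr Hip) h // subrr.
Qed.

Lemma T0sub1 {phi} : D phi -> dom T1 phi /\ app T1 phi = app T0 phi.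
Proof.
move=> Dp; case: HA1 => ch rel.
have key : forall u, dom Tt0 u -> ip (app Tt0 u) phi = ip u (app T0 phi).
  move=> u du; have Du : D u by apply/Hdom.
  by rewrite (ipJ Hip phi (app Tt0 u)) -(Hformal _ _ Dp Du) -(ipJ Hip (app T0 phi) u).
have dT1 : dom T1 phi by apply/ch; exists (app T0 phi).
split => //; apply: dens_eq => u Du.
have du : dom Tt0 u by apply/Hdom.
by rewrite -(rel u phi du dT1) key.
Qed.

Lemma T1lin a x y : dom T1 x -> dom T1 y ->
  dom T1 (a *: x + y) /\ app T1 (a *: x + y) = a *: app T1 x + app T1 y.
Proof.
move=> dx dy; case: HA1 => ch rel.
have key : forall u, dom Tt0 u ->
    ip (app Tt0 u) (a *: x + y) = ip u (a *: app T1 x + app T1 y).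
  by move=> u du; rewrite !(ipDr Hip) !(ipZr Hip) !rel.
have dT : dom T1 (a *: x + y) by apply/ch; exists (a *: app T1 x + app T1 y).
split => //; apply: dens_eq => u Du.
have du : dom Tt0 u by apply/Hdom.
by rewrite -rel // key.
Qed.

Lemma T1sub {x y} : dom T1 x -> dom T1 y ->
  dom T1 (x - y) /\ app T1 (x - y) = app T1 x - app T1 y.
Proof.
move=> dx dy; have [h1 h2] := T1lin (-1) y x dy dx.
rewrite !scaleN1r (addrC (- y)) in h1 h2.
by rewrite (addrC (- app T1 y)) in h2.
Qed.
Lemma T1add {x y} : dom T1 x -> dom T1 y ->
  dom T1 (x + y) /\ app T1 (x + y) = app T1 x + app T1 y.
Proof.
by move=> dx dy; have := T1lin 1 x y dx dy; rewrite !scale1r.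
Qed.

Definition Kt g := dom Tt1 g /\ app Tt1 g = 0.

Lemma Kt_orth {g u} : Kt g -> D u -> ip (app T0 u) g = 0.
Proof. by case: HA2 => _ rel [dg ag] Du; rewrite rel // ag ip0r. Qed.

Lemma orth_Kt g : (forall u, D u -> ip (app T0 u) g = 0) -> Kt g.
Proof.
move=> h; case: HA2 => ch rel.
have dg : dom Tt1 g by apply/ch; exists 0 => u Du; rewrite h // ip0r.
split => //; apply: dens_eq => u Du.
by rewrite -rel // h // ip0r.
Qed.

Lemma Kt_lin a x y : Kt x -> Kt y -> Kt (a *: x + y).
Proof.
move=> kx ky; apply: orth_Kt => u Du.
by rewrite (ipDr Hip) (ipZr Hip) !Kt_orth // mulr0 addr0.
Qed.
Lemma Kt0 : Kt 0.
Proof. by apply: orth_Kt => u _; rewrite ip0r. Qed.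
Lemma Kt_sub {x y} : Kt x -> Kt y -> Kt (x - y).
Proof. by move=> kx ky; rewrite addrC -scaleN1r; apply: Kt_lin. Qed.


Lemma cancel_le (k a B : R) : 0 <= a -> 0 <= B -> k * a ^+ 2 <= B * a -> k * a <= B.
Proof.
move=> a0 B0 h; have [->|anz] := eqVneq a 0; first by rewrite mulr0.
have ap : 0 < a by rewrite lt_def anz a0.
by rewrite -(ler_pM2r ap) -mulrA -expr2.
Qed.

Lemma sq_le (a b : R) : 0 <= a -> 0 <= b -> a ^+ 2 <= b ^+ 2 -> a <= b.
Proof.
by move=> a0 b0; rewrite ler_pXn2r // ?nnegrE.
Qed.

Lemma S0sym {u w} : D u -> D w -> ip (S0 u) w = ip u (S0 w).
Proof.
move=> Du Dw; rewrite (ipDl Hip) (ipDr Hip) (Hformal _ _ Du Dw).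
rewrite (ipJ Hip w (app Tt0 u)) -(Hformal _ _ Dw Du) -(ipJ Hip (app T0 w) u).
by rewrite addrC.
Qed.

Lemma T0sub {x y} : D x -> D y -> D (x - y) /\ app T0 (x - y) = app T0 x - app T0 y.
Proof. by have [_ _ h _] := lin_gen _ L0; apply: h. Qed.

Lemma S0sub {x y} : D x -> D y -> D (x - y) /\ S0 (x - y) = S0 x - S0 y.
Proof.
move=> Dx Dy; have [Dd e1] := T0sub Dx Dy.
have [_ _ h _] := lin_gen _ Lt0.
have [_ e2] := h x y (proj1 (Hdom x) Dx) (proj1 (Hdom y) Dy).
by split => //; rewrite e1 e2 opprD addrACA.
Qed.

Lemma EXT {v} : Kt v ->
  [/\ dom T1 v, nm (app T1 v) <= c * nm v & 2 * mu0 * N v <= Re (ip (app T1 v) v)].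
Proof.
move=> Kv.
have ex : forall n : nat, exists phi, D phi /\ nm (v - phi) < (n.+1%:R)^-1.
  move=> n; have hn0 : 0 < (n.+1%:R : R)^-1 by rewrite invr_gt0 ltr0n.
  have [y [Dy hy]] := Hdense v _ hn0; exists y; split => //.
  by move: hy; rewrite (hnormE Hh) ltcR.
have [phi hphi] := choice ex.
have cvphi : cv ip phi v.
  apply: null_le null_inv => n /=; rewrite (nm_subC Hip); apply: ltW; exact: (hphi n).2.
have csphi := cv_cs Hh cvphi.
have csS : cs ip (fun n => S0 (phi n)).
  move=> e e0; have ec : 0 < e / c by rewrite divr_gt0.
  have [K hK] := csphi _ ec; exists K => m n hm hn.
  have [Dd eq] := S0sub (hphi m).1 (hphi n).1.
  rewrite -eq; have h1 := bnd Dd; have h2 := hK m n hm hn.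
  have ce : c * (e / c) = e by rewrite mulrCA divff ?mulr1 // gt_eqF.
  have h3 : c * nm (phi m - phi n) < c * (e / c) by rewrite ltr_pM2l.
  lra.
have [b cvb] := complete Hh csS.
have key : forall u, D u -> ip (S0 u) v = ip u b.
  move=> u Du.
  have h1 := ip_ccv Hh (cv_const Hh (S0 u)) cvphi.
  have h2 := ip_ccv Hh (cv_const Hh u) cvb.
  apply: (ccv_uniq h1); apply: ccv_ext h2 => n /=.
  by rewrite (S0sym Du (hphi n).1).
have tt : forall u, D u -> ip (app Tt0 u) v = ip u b.
  move=> u Du.
  have -> : app Tt0 u = S0 u - app T0 u by rewrite addrAC subrr add0r.
  by rewrite (ipBl Hip) key // (Kt_orth Kv Du) subr0.
have dT1 : dom T1 v.
  case: HA1 => ch _; apply/ch; exists b => u du.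
  by apply: tt; apply/Hdom.
have T1v : app T1 v = b.
  apply: dens_eq => u Du; case: HA1 => _ rel.
  have du : dom Tt0 u by apply/Hdom.
  by rewrite -(rel u v du dT1) tt.
split => //; rewrite T1v.
- have hx := ccv_Re (ip_ccv Hh cvb cvb).
  have hy := rcv_scale (c ^+ 2) _ _ (ccv_Re (ip_ccv Hh cvphi cvphi)).
  have hle : N b <= c ^+ 2 * N v.
    apply: (rcv_le hx hy) => n /=.
    have h := bnd (hphi n).1; have := nmg (S0 (phi n)).
    rewrite -[Re (ip (S0 (phi n)) (S0 (phi n)))]/(N (S0 (phi n))).
    rewrite -[Re (ip (phi n) (phi n))]/(N (phi n)).
    rewrite -!(nm_sqr Hip) => h0.
    have : nm (S0 (phi n)) ^+ 2 <= (c * nm (phi n)) ^+ 2.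
      by rewrite ler_pXn2r // ?nnegrE // mulr_ge0 // ?nmg // ltW.
    rewrite exprMn => hh. exact: hh.
  apply: sq_le; [exact: nmg | by rewrite mulr_ge0 ?nmg // ltW | ].
  by rewrite exprMn !(nm_sqr Hip).
- have hx := rcv_scale (2 * mu0) _ _ (ccv_Re (ip_ccv Hh cvphi cvphi)).
  have hy := ccv_Re (ip_ccv Hh cvb cvphi).
  apply: (rcv_le hx hy) => n /=.
  exact: pos (hphi n).1.
Qed.

Lemma T0est {u} : D u -> mu0 * nm u <= nm (app T0 u).
Proof.
move=> Du; have := pos Du.
rewrite (ipDl Hip) ReD (ipJ Hip u (app Tt0 u)) -(Hformal _ _ Du Du) ReJ => h.
have h2 := ReCS Hip (app T0 u) u.
apply: cancel_le; rewrite ?nmg // (nm_sqr Hip).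
move: h h2; rewrite -[Re (ip (app T0 u) u)]/(Re (ip (app T0 u) u)).
set r := Re _; lra.
Qed.

Lemma Ktest {u0 w} : D u0 -> Kt w -> 2 * mu0 * nm w <= nm (app T0 u0 + app T1 w).
Proof.
move=> Du Kw; have [dw _ hp] := EXT Kw.
have h2 := ReCS Hip (app T0 u0 + app T1 w) w.
rewrite (ipDl Hip) ReD (Kt_orth Kw Du) Re0 add0r in h2.
apply: cancel_le; rewrite ?nmg // (nm_sqr Hip).
move: hp h2; set r := Re _; lra.
Qed.


Lemma vsub4 (x y a b : V) : (x - y) - (a - b) = (x - a) - (y - b).
Proof. by rewrite !opprB addrACA [-y + _]addrC -addrACA. Qed.
Lemma vsum4 (x y a b : V) : (x + y) - (a + b) = (x - a) + (y - b).
Proof. by rewrite opprD addrACA. Qed.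

Lemma cv_sub {u w a b} : cv ip u a -> cv ip w b -> cv ip (fun n => u n - w n) (a - b).
Proof.
move=> hu hw; apply: null_le (null_add hu hw) => n /=.
by rewrite vsub4 -(nm_opp Hip (w n - b)) nm_tri.
Qed.

Lemma D0 : D 0 /\ app T0 0 = 0.
Proof. by have [h1 h2 _ _] := lin_gen _ L0. Qed.

Lemma T1_0 : dom T1 0 /\ app T1 0 = 0.
Proof. by have [d0 a0] := D0; have [h1 h2] := T0sub1 d0; rewrite h2 a0. Qed.

Lemma Kt_T1 {w} : Kt w -> dom T1 w.
Proof. by move=> Kw; have [] := EXT Kw. Qed.

Definition Mset g := exists u0 w, D u0 /\ Kt w /\ g = app T0 u0 + app T1 w.

Lemma Mset0 : Mset 0.
Proof.
exists 0, 0; split; first exact: D0.1.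
by split; [exact: Kt0 | rewrite D0.2 T1_0.2 addr0].
Qed.

Lemma Mset_lin a x y : Mset x -> Mset y -> Mset (a *: x + y).
Proof.
move=> [u [w [Du [Kw ->]]]] [u' [w' [Du' [Kw' ->]]]].
case: L0 => _ dl al.
have [dT al1] := T1lin a w w' (Kt_T1 Kw) (Kt_T1 Kw').
exists (a *: u + u'), (a *: w + w'); split; first exact: dl.
split; first exact: Kt_lin.
by rewrite al // al1 scalerDr addrACA.
Qed.

Lemma Mset_cl u g : (forall n, Mset (u n)) -> cv ip u g -> Mset g.
Proof.
move=> hM hcv.
have ex : forall n, exists p : V * V, [/\ D p.1, Kt p.2 & u n = app T0 p.1 + app T1 p.2].
  by move=> n; have [u0 [w [h1 [h2 h3]]]] := hM n; exists (u0, w).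
have [P hP] := choice ex.
pose u0 := fun n => (P n).1; pose w := fun n => (P n).2.
have Du0 : forall n, D (u0 n) by move=> n; case: (hP n).
have Kw : forall n, Kt (w n) by move=> n; case: (hP n).
have eu : forall n, u n = app T0 (u0 n) + app T1 (w n) by move=> n; case: (hP n).
have diff : forall m n, u m - u n = app T0 (u0 m - u0 n) + app T1 (w m - w n).
  move=> m n; rewrite (T0sub (Du0 m) (Du0 n)).2 (T1sub (Kt_T1 (Kw m)) (Kt_T1 (Kw n))).2.
  by rewrite !eu vsum4.
have csu := cv_cs Hh hcv.
have csw : cs ip w.
  move=> e e0; have e2 : 0 < 2 * mu0 * e by rewrite !mulr_gt0.
  have [K hK] := csu _ e2; exists K => m n hm hn.
  have := Ktest (T0sub (Du0 m) (Du0 n)).1 (Kt_sub (Kw m) (Kw n)).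
  rewrite -diff => h; have := hK m n hm hn => h'.
  have : 2 * mu0 * nm (w m - w n) < 2 * mu0 * e by apply: le_lt_trans h h'.
  by rewrite ltr_pM2l // mulr_gt0.
have [winf cvw] := complete Hh csw.
have cn20 : cn2 (0 : R[i]) = 0 by rewrite /cn2 /= expr0n addr0.
have Kwinf : Kt winf.
  apply: orth_Kt => uu Duu.
  have h1 := ip_ccv Hh (cv_const Hh (app T0 uu)) cvw.
  have h2 : ccv (fun n => ip (app T0 uu) (w n)) 0.
    by move=> e e0; exists 0%N => n _; rewrite (Kt_orth (Kw n) Duu) subrr cn20.
  exact: ccv_uniq h1 h2.
have dwinf := Kt_T1 Kwinf.
have cvT1 : cv ip (fun n => app T1 (w n)) (app T1 winf).
  apply: null_le (null_scale (K := c) (ltW Hc) cvw) => n /=.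
  rewrite -(T1sub (Kt_T1 (Kw n)) dwinf).2.
  by have [] := EXT (Kt_sub (Kw n) Kwinf).
have cvT0 : cv ip (fun n => app T0 (u0 n)) (g - app T1 winf).
  have h := cv_sub hcv cvT1.
  apply: null_le h => n /=; by rewrite eu addrK.
have csu0 : cs ip u0.
  have csT0 := cv_cs Hh cvT0.
  move=> e e0; have e2 : 0 < mu0 * e by rewrite mulr_gt0.
  have [K hK] := csT0 _ e2; exists K => m n hm hn.
  have [Dd ed] := T0sub (Du0 m) (Du0 n).
  have := T0est Dd; rewrite ed => h; have := hK m n hm hn => h'.
  have : mu0 * nm (u0 m - u0 n) < mu0 * e by apply: le_lt_trans h h'.
  by rewrite ltr_pM2l.
have [uinf cvu] := complete Hh csu0.
have [Duinf euinf] := Hcl _ _ _ Du0 (proj2 (conv_cv Hh _ _) cvu) (proj2 (conv_cv Hh _ _) cvT0).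
exists uinf, winf; split => //; split => //.
by rewrite euinf subrK.
Qed.

Lemma exist_dec {u} : dom T1 u -> exists u0 nu nut,
  [/\ D u0, dom T1 nu /\ app T1 nu = 0, Kt nut & u = u0 + nu + nut].
Proof.
move=> du.
have [m [[u0 [w [Du0 [Kw em]]]] horth]] :=
  proj Hh Mset Mset0 Mset_lin Mset_cl (app T1 u).
set g := app T1 u - m in horth.
have Kg : Kt g.
  apply: orth_Kt => uu Duu; apply: horth; exists uu, 0; split => //; split.
    exact: Kt0.
  by rewrite T1_0.2 addr0.
have h0 : ip (app T1 g) g = 0.
  by apply: horth; exists 0, g; rewrite D0.2 add0r; split => //; exact: D0.1.
have [dg _ hp] := EXT Kg.
rewrite h0 Re0 in hp.
have g0 : g = 0.
  apply: (N_eq0 Hip); apply/eqP; rewrite eq_le N_ge0 // andbT.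
  have := N_ge0 Hip g; move: hp; set q := N g => hp hq.
  rewrite -(pmulr_rle0 _ (_ : 0 < 2 * mu0)) //; by rewrite mulr_gt0.
have eT1 : app T1 u = app T0 u0 + app T1 w.
  by rewrite -em; apply/eqP; rewrite -subr_eq0; apply/eqP.
have [dT1u0 eu0] := T0sub1 Du0.
have dw := Kt_T1 Kw.
have [d1 e1] := T1sub du dT1u0.
have [d2 e2] := T1sub d1 dw.
exists u0, (u - u0 - w), w; split => //.
  by split => //; rewrite e2 e1 eT1 eu0 addrAC addrK subrr.
by rewrite -addrA subrK addrC subrK.
Qed.

Lemma zero_dec {u0 nu nut} : D u0 -> dom T1 nu -> app T1 nu = 0 -> Kt nut ->
  u0 + nu + nut = 0 -> [/\ u0 = 0, nu = 0 & nut = 0].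
Proof.
move=> Du0 dnu anu Knut hs.
have [dT1u0 eu0] := T0sub1 Du0.
have dnut := Kt_T1 Knut.
have [d1 e1] := T1add dT1u0 dnu.
have [d2 e2] := T1add d1 dnut.
have hT : app T0 u0 + app T1 nut = 0.
  by rewrite -T1_0.2 -hs e2 e1 anu addr0 eu0.
have nut0 : nut = 0.
  apply: (nm_eq0 Hip); apply/eqP; rewrite eq_le nmg andbT.
  have := Ktest Du0 Knut; rewrite hT (nm0 Hip) => h.
  by rewrite -(pmulr_rle0 _ (_ : 0 < 2 * mu0)) // mulr_gt0.
have u00 : u0 = 0.
  rewrite nut0 T1_0.2 addr0 in hT.
  apply: (nm_eq0 Hip); apply/eqP; rewrite eq_le nmg andbT.
  have := T0est Du0; rewrite hT (nm0 Hip) => h.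
  by rewrite -(pmulr_rle0 _ Hmu).
split => //.
by move: hs; rewrite u00 nut0 add0r addr0.
Qed.

Lemma main :
  (forall u, dom T1 u <->
     exists u0 nu nut, [/\ dom T0 u0, dom T1 nu /\ app T1 nu = 0,
                           dom Tt1 nut /\ app Tt1 nut = 0 & u = u0 + nu + nut]) /\
  (forall u, dom T1 u ->
     exists! t : V * V * V,
       [/\ dom T0 t.1.1, dom T1 t.1.2 /\ app T1 t.1.2 = 0,
           dom Tt1 t.2 /\ app Tt1 t.2 = 0 & u = t.1.1 + t.1.2 + t.2]).
Proof.
split.
  move=> u; split; first exact: exist_dec.
  move=> [u0 [nu [nut [Du0 [dnu _] Knut ->]]]].
  have [d1 _] := T1add (T0sub1 Du0).1 dnu.
  by have [] := T1add d1 (Kt_T1 Knut).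
move=> u du; have [u0 [nu [nut [Du0 [dnu anu] Knut e]]]] := exist_dec du.
exists (u0, nu, nut); split => //.
move=> [[a b] d] /= [Da [db ab] Kd e'].
have h : (a - u0) + (b - nu) + (d - nut) = 0 by rewrite -!vsum4 -e' -e subrr.
have [Dd _] := T0sub Da Du0.
have [dbn abn] := T1sub db dnu.
have abn0 : app T1 (b - nu) = 0 by rewrite abn ab anu subrr.
have [z1 z2 z3] := zero_dec Dd dbn abn0 (Kt_sub Kd Knut) h.
move/eqP: z1; move/eqP: z2; move/eqP: z3; rewrite !subr_eq0 => /eqP -> /eqP -> /eqP ->.
by [].
Qed.

End Op.


Theorem theorem3p1 (R : realType) (V : lmodType R[i]) (ip : V -> V -> R[i])
  (T0 Tt0 T1 Tt1 : op V) :
  hilbert_space ip ->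
  joint_closed_friedrichs ip T0 Tt0 ->
  is_adjoint ip T1 Tt0 ->
  is_adjoint ip Tt1 T0 ->
  (forall u, dom T1 u <->
     exists u0 nu nut, [/\ dom T0 u0, dom T1 nu /\ app T1 nu = 0,
                           dom Tt1 nut /\ app Tt1 nut = 0 & u = u0 + nu + nut]) /\
  (forall u, dom T1 u ->
     exists! t : V * V * V,
       [/\ dom T0 t.1.1, dom T1 t.1.2 /\ app T1 t.1.2 = 0,
           dom Tt1 t.2 /\ app Tt1 t.2 = 0 & u = t.1.1 + t.1.2 + t.2]).
Proof.
move=> Hh [[L0 [Lt0 [Hdom [Hdense [Hformal [[c [Hc Hbnd]] [mu0 [Hmu Hpos]]]]]]]] Hcl _] HA1 HA2.
exact (main T0 Tt0 T1 Tt1 c mu0 Hh L0 Lt0 Hdom Hdense Hformal Hc Hbnd Hmu Hpos Hcl HA1 HA2).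
Qed.
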